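(* Let $k\ge 1$ and a budget $p$ be given. For $j=1,\dots,k$ let $c_{a,j},c_{c,j}>0$, let $r_{a,j}:(0,\infty)\to(0,\infty)$ be positive, decreasing and at least twice continuously differentiable, and let $r_{c,j}:(0,\infty)\to(0,\infty)$ be positive, increasing and at least twice continuously differentiable. Let $w_j:(0,\infty)\to(0,\infty)$ and $\rho_j:(0,\infty)\to[-1,1]$ ($j=1,\dots,k$) be given functions (cost and correlation of the $j$-th low-fidelity model as a function of its number of training samples) with $1-\rho_j^2(n)\le c_{a,j}r_{a,j}(n)$ and $w_j(n)\le c_{c,j}r_{c,j}(n)$; set $n_0=0$, $w_0=1$. For $j=1$, let $p\ge 2$, define $u_1(n_1)=\frac{1}{p-n_1}\big(c_{a,1}r_{a,1}(n_1)+c_{c,1}r_{c,1}(n_1)\big)$ on $[1,p-1]$, assume $c_{a,1}r_{a,1}''+c_{c,1}r_{c,1}''>0$ on $[1,p-1]$, and let $n_1^*$ be the unique global minimizer of $u_1$ on $[1,p-1]$. Iteratively for $j=2,\dots,k$, given $n_1^*,\dots,n_{j-1}^*$, set $$p_{j-1}=p-\sum_{i=1}^{j-1}n_i^*,\quad \kappa_{j-1}=\sum_{i=0}^{j-2}w_i(n_i^* )\big(1-\rho_{i+1}^2(n_{i+1}^* )\big),\quad \hat c_{a,j}=w_{j-1}(n_{j-1}^* )\,c_{a,j},$$ (with $n_0^*=0$, $w_0(n_0^* )=1$), and consider $$u_j:[1,p_{j-1}-1]\to(0,\infty),\qquad u_j(n_j)=\frac{1}{p_{j-1}-n_j}\Big(\kappa_{j-1}+\hat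 c_{a,j}r_{a,j}(n_j)+c_{c,j}r_{c,j}(n_j)\Big).$$ If $p_{j-1}\ge 2$ and $$\hat c_{a,j}\,r_{a,j}''(n_j)+c_{c,j}\,r_{c,j}''(n_j)>0\quad\text{for all } n_j\in[1,p_{j-1}-1],$$ then there exists a unique minimizer $n_j^*\in[1,p_{j-1}-1]$ of $u_j$.
   Context: This describes the sequential construction of a hierarchy of low-fidelity models for context-aware multi-fidelity Monte Carlo estimation: $n_j$ is the number of high-fidelity evaluations used to train the $j$-th low-fidelity model, $p$ is the total budget in units of high-fidelity evaluations, and $u_j$ is (up to constant factors) an upper bound of the estimator's mean-squared error as a function of $n_j$ with $n_1^*,\dots,n_{j-1}^*$ fixed. *)

(* Defs.v *)
From Stdlib Require Import Reals Lra.
From Coquelicot Require Import Coquelicot.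
Open Scope R_scope.

Fixpoint psum (f : nat -> R) (n : nat) : R :=
  match n with O => 0 | S m => psum f m + f m end.

Definition wext (w : nat -> R -> R) (i : nat) (x : R) : R :=
  match i with O => 1 | _ => w i x end.

(* p_j = p - sum_{i=1}^{j} n_i^star  (so p_0 = p) *)
Definition pbud (p : R) (ns : nat -> R) (j : nat) : R :=
  p - psum (fun i => ns (S i)) j.

(* kappa_j = sum_{i=0}^{j-1} w_i(n_i^star) (1 - rho_{i+1}(n_{i+1}^star)^2)  (kappa_0 = 0) *)
Definition kappa (w rho : nat -> R -> R) (ns : nat -> R) (j : nat) : R :=
  psum (fun i => wext w i (ns i) * (1 - (rho (S i) (ns (S i)))^2)) j.

(* hat c_{a,j} = w_{j-1}(n_{j-1}^star) c_{a,j}  (= c_{a,1} for j = 1) *)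
Definition cahat (w : nat -> R -> R) (ca : nat -> R) (ns : nat -> R) (j : nat) : R :=
  wext w (pred j) (ns (pred j)) * ca j.

Definition uj (p : R) (ca cc : nat -> R) (ra rc w rho : nat -> R -> R)
  (ns : nat -> R) (j : nat) (n : R) : R :=
  (kappa w rho ns (pred j) + cahat w ca ns j * ra j n + cc j * rc j n)
  / (pbud p ns (pred j) - n).

Definition is_min_on (f : R -> R) (a b x : R) : Prop :=
  a <= x <= b /\ forall y, a <= y <= b -> f x <= f y.

Definition unique_min_on (f : R -> R) (a b x : R) : Prop :=
  is_min_on f a b x /\ forall y, is_min_on f a b y -> y = x.

Definition D2 (f : R -> R) : R -> R := Derive (Derive f).

Definition C2_pos (f : R -> R) : Prop :=
  forall x, 0 < x ->
    ex_derive f x /\ ex_derive (Derive f) x /\ continuous (D2 f) x.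

Definition pos_fun (f : R -> R) : Prop := forall x, 0 < x -> 0 < f x.
Definition decr_pos (f : R -> R) : Prop :=
  forall x y, 0 < x -> x <= y -> f y <= f x.
Definition incr_pos (f : R -> R) : Prop :=
  forall x y, 0 < x -> x <= y -> f x <= f y.

(* Main.v *)
Require Import Defs.
From Stdlib Require Import Reals Lra FunctionalExtensionality.
From Coquelicot Require Import Coquelicot.
Open Scope R_scope.

Lemma cont_of_der (f : R -> R) x l : is_derive f x l -> continuity_pt f x.
Proof.
  intro H. apply continuity_pt_filterlim. apply (ex_derive_continuous f x).
  exists l. exact H.
Qed.

Lemma der_h (N : R -> R) (m P t d : R) : is_derive N t d ->
  is_derive (fun s => N s + m * s - m * P) t (d + m).
Proof.
  intro H.
  apply (is_derive_ext (fun s => plus (plus (N s) (m*s)) (-(m*P)))).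
  { intros; unfold plus; simpl; ring. }
  replace (d+m) with (plus (plus d (m*1)) zero)
    by (unfold plus, zero; simpl; ring).
  apply (is_derive_plus (fun s => plus (N s) (m*s)) (fun _ => -(m*P))).
  - apply (is_derive_plus N (fun s => m*s)); auto.
    apply (is_derive_scal (fun s => s)). apply (is_derive_id t).
  - exact (@is_derive_const R_AbsRing R_NormedModule (-(m*P)) t).
Qed.

Lemma mvtI (g dg : R -> R) (P a b : R) :
  (forall t, 1<=t<=P-1 -> is_derive g t (dg t)) -> 1 <= a -> a < b -> b <= P-1 ->
  exists c, a <= c <= b /\ g b - g a = dg c * (b - a).
Proof.
  intros Hd Ha Hab Hb.
  destruct (MVT_gen g a b dg) as [c [Hc He]].
  - intros s Hs. rewrite Rmin_left in Hs by lra. rewrite Rmax_right in Hs by lra.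
    apply Hd; lra.
  - intros s Hs. rewrite Rmin_left in Hs by lra. rewrite Rmax_right in Hs by lra.
    apply (cont_of_der g s (dg s)). apply Hd; lra.
  - rewrite Rmin_left in Hc by lra. rewrite Rmax_right in Hc by lra.
    exists c; auto.
Qed.

Lemma core (f N dN d2N : R->R) (P : R) :
 2 <= P -> (forall t, f t = N t / (P - t)) ->
 (forall t, 1<=t<=P-1 -> is_derive N t (dN t)) ->
 (forall t, 1<=t<=P-1 -> is_derive dN t (d2N t)) ->
 (forall t, 1<=t<=P-1 -> 0 < d2N t) ->
 exists! x, is_min_on f 1 (P-1) x.
Proof.
  intros HP Hf HN HdN Hd2.
  assert (nox : forall x y, is_min_on f 1 (P-1) x -> is_min_on f 1 (P-1) y -> x < y -> False).
  { intros x y [Ix Mx] [Iy My] Hxy.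
    set (m := f x).
    assert (Hfy : f y = m) by (unfold m; specialize (Mx y Iy); specialize (My x Ix); lra).
    set (h := fun s => N s + m * s - m * P).
    assert (hge : forall t, 1<=t<=P-1 -> 0 <= h t).
    { intros t It. specialize (Mx t It). fold m in Mx. rewrite Hf in Mx. unfold h.
      assert (E : N t = N t / (P - t) * (P - t)) by (field; lra).
      assert (0 < P - t) by lra. nra. }
    assert (hz : forall t, 1<=t<=P-1 -> f t = m -> h t = 0).
    { intros t It Ht. rewrite Hf in Ht. unfold h.
      assert (E : N t = N t / (P - t) * (P - t)) by (field; lra).
      rewrite Ht in E. lra. }
    assert (hx : h x = 0) by (apply hz; auto).
    assert (hy : h y = 0) by (apply hz; auto).
    set (dh := fun s => dN s + m).
    assert (Hdh : forall t, 1<=t<=P-1 -> is_derive h t (dh t)).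
    { intros t It. apply der_h. auto. }
    assert (mono : forall a b, 1<=a -> a<b -> b<=P-1 -> dh a < dh b).
    { intros a b Ha Hab Hb. destruct (mvtI dN d2N P a b HdN Ha Hab Hb) as [c [Hc E]].
      unfold dh. assert (0 < d2N c) by (apply Hd2; lra). nra. }
    destruct (mvtI h dh P x y Hdh ltac:(lra) Hxy ltac:(lra)) as [c [Hc E]].
    assert (dc : dh c = 0) by nra.
    destruct (Rle_lt_or_eq_dec x c (proj1 Hc)) as [Hxc|Hxc].
    - set (t := (x + c) / 2).
      destruct (mvtI h dh P x t Hdh ltac:(lra) ltac:(unfold t; lra) ltac:(unfold t; lra)) as [e [He E2]].
      assert (e < c) by (unfold t in He; lra).
      destruct (Rle_lt_or_eq_dec x e (proj1 He)) as [Hxe|Hxe].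
      + assert (dh e < dh c) by (apply mono; lra).
        assert (0 <= h t) by (apply hge; unfold t; lra).
        assert (x < t) by (unfold t; lra). nra.
      + subst e. assert (dh x < dh c) by (apply mono; lra).
        assert (0 <= h t) by (apply hge; unfold t; lra).
        assert (x < t) by (unfold t; lra). nra.
    - subst c. set (t := (x + y) / 2).
      destruct (mvtI h dh P t y Hdh ltac:(unfold t; lra) ltac:(unfold t; lra) ltac:(lra)) as [e [He E2]].
      assert (dh x < dh e) by (apply mono; unfold t in He; lra).
      assert (0 <= h t) by (apply hge; unfold t; lra).
      assert (t < y) by (unfold t; lra). nra. }
  destruct (continuity_ab_min f 1 (P-1)) as [x [Mx Ix]].
  - lra.
  - intros c Ic.
    assert (Hfe : f = fun t => N t / (P - t)) by (apply functional_extensionality; auto).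
    rewrite Hfe.
    apply (continuity_pt_div N (fun t => P - t)).
    + apply (cont_of_der N c (dN c)). auto.
    + apply continuity_pt_minus. apply continuity_pt_const. intros a b; auto.
      apply continuity_pt_id.
    + lra.
  - exists x. split; [split; auto|].
    intros y Hy. destruct (Rtotal_order x y) as [H|[H|H]]; auto.
    + exfalso. apply (nox x y); auto. split; auto.
    + exfalso. apply (nox y x); auto. split; auto.
Qed.

Lemma der_lin (f g : R -> R) (K A C t df dg : R) :
  is_derive f t df -> is_derive g t dg ->
  is_derive (fun s => K + A * f s + C * g s) t (A * df + C * dg).
Proof.
  intros Hf Hg.
  apply (is_derive_ext (fun s => plus (plus K (A * f s)) (C * g s))).
  { intros; unfold plus; simpl; ring. }
  replace (A * df + C * dg) with (plus (plus zero (A*df)) (C*dg))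
    by (unfold plus, zero; simpl; ring).
  apply (is_derive_plus (fun s => plus K (A * f s)) (fun s => C * g s)).
  - apply (is_derive_plus (fun _ => K) (fun s => A * f s)).
    + exact (@is_derive_const R_AbsRing R_NormedModule K t).
    + apply is_derive_scal; auto.
  - apply is_derive_scal; auto.
Qed.

Theorem proposition3
  (k : nat) (p : R) (ca cc : nat -> R) (ra rc w rho : nat -> R -> R)
  (hk : (1 <= k)%nat)
  (Hca : forall j, (1 <= j <= k)%nat -> 0 < ca j)
  (Hcc : forall j, (1 <= j <= k)%nat -> 0 < cc j)
  (Hra : forall j, (1 <= j <= k)%nat -> pos_fun (ra j) /\ decr_pos (ra j) /\ C2_pos (ra j))
  (Hrc : forall j, (1 <= j <= k)%nat -> pos_fun (rc j) /\ incr_pos (rc j) /\ C2_pos (rc j))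
  (Hw : forall j, (1 <= j <= k)%nat -> pos_fun (w j))
  (Hrho : forall j, (1 <= j <= k)%nat -> forall x, 0 < x -> -1 <= rho j x <= 1)
  (Hrhob : forall j, (1 <= j <= k)%nat -> forall x, 0 < x ->
             1 - (rho j x)^2 <= ca j * ra j x)
  (Hwb : forall j, (1 <= j <= k)%nat -> forall x, 0 < x -> w j x <= cc j * rc j x)
  (j : nat) (ns : nat -> R) (hj : (1 <= j <= k)%nat)
  (Hprev : forall i, (1 <= i < j)%nat ->
     unique_min_on (uj p ca cc ra rc w rho ns i) 1 (pbud p ns (pred i) - 1) (ns i))
  (Hp : 2 <= pbud p ns (pred j))
  (Hconv : forall x, 1 <= x <= pbud p ns (pred j) - 1 ->
     0 < cahat w ca ns j * D2 (ra j) x + cc j * D2 (rc j) x) :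
  exists! x, is_min_on (uj p ca cc ra rc w rho ns j) 1 (pbud p ns (pred j) - 1) x.
Proof.
  destruct (Hra j hj) as [_ [_ Cra]]. destruct (Hrc j hj) as [_ [_ Crc]].
  set (K := kappa w rho ns (pred j)) in *.
  set (A := cahat w ca ns j) in *.
  set (C := cc j) in *.
  set (P := pbud p ns (pred j)) in *.
  apply (core _ (fun s => K + A * ra j s + C * rc j s)
            (fun s => A * Derive (ra j) s + C * Derive (rc j) s)
            (fun s => A * D2 (ra j) s + C * D2 (rc j) s) P Hp).
  - intros t. reflexivity.
  - intros t It. destruct (Cra t ltac:(lra)) as [d1 _]. destruct (Crc t ltac:(lra)) as [d2 _].
    apply der_lin; apply Derive_correct; auto.
  - intros t It. destruct (Cra t ltac:(lra)) as [_ [d1 _]]. destruct (Crc t ltac:(lra)) as [_ [d2 _]].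
    apply (is_derive_ext (fun s => 0 + A * Derive (ra j) s + C * Derive (rc j) s)).
    { intros s; cbv beta; lra. }
    apply der_lin; apply Derive_correct; auto.
  - exact Hconv.
Qed.
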